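(* Let $\mathcal D=\{x\in\mathbb R^d:Bx\le c\}$ be a nonempty bounded polytope, $A\in\mathbb R^{m\times d}$, $b\in\mathbb R^d$, and $f(x):=g(Ax)+\langle b,x\rangle$, where $g$ is continuously differentiable on an open set containing $A\mathcal D$ and $\mu_g$-strongly convex on $A\mathcal D$ (Euclidean norm) with $\mu_g>0$. Let $\mathcal X^*:=\arg\min_{x\in\mathcal D}f(x)$, $G:=\max_{x\in\mathcal D}\|\nabla g(Ax)\|$, $M:=\mathrm{diam}(\mathcal D)$, $M_A:=\mathrm{diam}(A\mathcal D)$, and let $\theta>0$ be a Hoffman constant for the matrix $\begin{pmatrix}A\\ b^\top\\ B\end{pmatrix}$ as defined in the context. Then for every $x\in\mathcal D$ and $x^*\in\mathcal X^*$, $$f(x^* )-f(x)-2\langle\nabla f(x),x^*-x\rangle\ \ge\ 2\tilde\mu\,d(x,\mathcal X^* )^2,\qquad \tilde\mu:=\frac{1}{2\theta^2\big(\|b\|M+3GM_A+\frac{2}{\mu_g}(G^2+1)\big)}.$$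
   Context: Euclidean norms; $d(x,\mathcal X^* )=\min_{y\in\mathcal X^*}\|x-y\|$; diameters are Euclidean. Hoffman constant: $\theta>0$ is such that for every $t\in\mathbb R^m$ and $s\in\mathbb R$ for which $P_{t,s}:=\{y\in\mathbb R^d:Ay=t,\ \langle b,y\rangle=s,\ By\le c\}$ is nonempty, and every $x$ with $Bx\le c$, one has $d(x,P_{t,s})\le\theta\,\|(Ax-t,\ \langle b,x\rangle-s)\|$. *)

(* Defs.v *)
From mathcomp Require Import all_boot.
From Stdlib Require Import Reals.
Set Implicit Arguments.
Unset Strict Implicit.
Unset Printing Implicit Defensive.
Local Open Scope R_scope.

Definition vec (n : nat) := 'I_n -> R.
Definition mat (m n : nat) := 'I_m -> 'I_n -> R.

Definition dot (n : nat) (x y : vec n) : R := \big[Rplus/0%R]_(i < n) (x i * y i).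
Definition vnorm (n : nat) (x : vec n) : R := sqrt (dot x x).
Definition vadd (n : nat) (x y : vec n) : vec n := fun i => x i + y i.
Definition vsub (n : nat) (x y : vec n) : vec n := fun i => x i - y i.
Definition vscale (n : nat) (a : R) (x : vec n) : vec n := fun i => a * x i.
Definition mulmv (m n : nat) (A : mat m n) (x : vec n) : vec m :=
  fun i => \big[Rplus/0%R]_(j < n) (A i j * x j).
Definition vle (n : nat) (x y : vec n) : Prop := forall i, x i <= y i.

Definition polyhedron (k d : nat) (B : mat k d) (c : vec k) : vec d -> Prop :=
  fun x => vle (mulmv B x) c.

Definition is_inf (E : R -> Prop) (r : R) : Prop :=
  (forall v, E v -> r <= v) /\ (forall r', (forall v, E v -> r' <= v) -> r' <= r).

Definition is_dist (n : nat) (S : vec n -> Prop) (x : vec n) (r : R) : Prop :=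
  is_inf (fun v => exists y, S y /\ v = vnorm (vsub x y)) r.

Definition is_diam (n : nat) (S : vec n -> Prop) (r : R) : Prop :=
  is_lub (fun v => exists x y, S x /\ S y /\ v = vnorm (vsub x y)) r.

Definition open_vset (n : nat) (U : vec n -> Prop) : Prop :=
  forall y, U y -> exists r, 0 < r /\ forall z, vnorm (vsub z y) < r -> U z.

Definition is_gradient (n : nat) (h : vec n -> R) (v : vec n) (y : vec n) : Prop :=
  forall eps, 0 < eps -> exists delta, 0 < delta /\
    forall z, vnorm (vsub z y) < delta ->
      Rabs (h z - h y - dot v (vsub z y)) <= eps * vnorm (vsub z y).

Definition C1_on (n : nat) (U : vec n -> Prop) (h : vec n -> R)
    (gradh : vec n -> vec n) : Prop :=
  (forall y, U y -> is_gradient h (gradh y) y) /\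
  (forall y, U y -> forall eps, 0 < eps -> exists delta, 0 < delta /\
     forall z, U z -> vnorm (vsub z y) < delta ->
       vnorm (vsub (gradh z) (gradh y)) < eps).

Definition strongly_convex_on (n : nat) (mu : R) (S : vec n -> Prop)
    (h : vec n -> R) : Prop :=
  forall y z lam, S y -> S z -> 0 <= lam <= 1 ->
    h (vadd (vscale lam y) (vscale (1 - lam) z))
      <= lam * h y + (1 - lam) * h z
         - mu / 2 * lam * (1 - lam) * (vnorm (vsub y z)) ^ 2.

Definition image_set (m d : nat) (A : mat m d) (D : vec d -> Prop) : vec m -> Prop :=
  fun y => exists x, D x /\ y = mulmv A x.

Definition P_ts (m d k : nat) (A : mat m d) (b : vec d) (B : mat k d) (c : vec k)
    (t : vec m) (s : R) : vec d -> Prop :=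
  fun y => mulmv A y = t /\ dot b y = s /\ vle (mulmv B y) c.

Definition hoffman_constant (m d k : nat) (A : mat m d) (b : vec d) (B : mat k d)
    (c : vec k) (theta : R) : Prop :=
  0 < theta /\
  forall (t : vec m) (s : R), (exists y, P_ts A b B c t s y) ->
  forall x, vle (mulmv B x) c ->
  forall r, is_dist (P_ts A b B c t s) x r ->
    r <= theta * sqrt ((vnorm (vsub (mulmv A x) t)) ^ 2 + (dot b x - s) ^ 2).

(* Main.v *)
Require Import Defs.
From HB Require Import structures.
From mathcomp Require Import all_boot.
From Stdlib Require Import Reals Lra Psatz FunctionalExtensionality.
Local Open Scope R_scope.
Set Implicit Arguments.
Unset Strict Implicit.

HB.instance Definition _ := Monoid.isComLaw.Build R 0 Rplus (fun a b c => esym (Rplus_assoc a b c)) Rplus_comm Rplus_0_l.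

Lemma big_lin (n : nat) (a c : R) (F G : 'I_n -> R) :
  \big[Rplus/0]_(i < n) (a * F i + c * G i) =
  a * \big[Rplus/0]_(i < n) F i + c * \big[Rplus/0]_(i < n) G i.
Proof.
elim: n F G => [|n IH] F G; [by rewrite !big_ord0; ring|].
rewrite !big_ord_recr /= IH; set s1 := \big[Rplus/0]_(i < n) F (widen_ord (leqnSn n) i); set s2 := \big[Rplus/0]_(i < n) G (widen_ord (leqnSn n) i); ring.
Qed.

Lemma big_nonneg n (F : 'I_n -> R) : (forall i, 0 <= F i) -> 0 <= \big[Rplus/0]_(i < n) F i.
Proof.
move=> H; apply: big_ind => //; [lra | move=> x y; lra].
Qed.

Lemma term_le_big n (F : 'I_n -> R) i : (forall i, 0 <= F i) -> F i <= \big[Rplus/0]_(j < n) F j.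
Proof.
move=> H; rewrite (bigD1 i) //=.
have : 0 <= \big[Rplus/0]_(j < n | j != i) F j by apply: big_ind => //; [lra | move=> x y; lra].
move=> Hs; rewrite -{1}[F i]Rplus_0_r; apply: Rplus_le_compat_l; exact: Hs.
Qed.

Lemma dot_ge0 n (x : vec n) : 0 <= dot x x.
Proof. apply: big_nonneg => i; nra. Qed.

Lemma dot_sym n (x y : vec n) : dot x y = dot y x.
Proof. rewrite /dot; apply: eq_bigr => i _; ring. Qed.

Lemma dot_lin n (u x y : vec n) a c :
  dot u (fun i => a * x i + c * y i) = a * dot u x + c * dot u y.
Proof. rewrite /dot -big_lin; apply: eq_bigr => i _; ring. Qed.

Lemma dot_sub n (u x y : vec n) : dot u (vsub x y) = dot u x - dot u y.
Proof.
have -> : vsub x y = (fun i => 1 * x i + (-1) * y i) by apply: functional_extensionality => i; rewrite /vsub; ring.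
rewrite dot_lin; ring.
Qed.

Lemma vnorm_ge0 n (x : vec n) : 0 <= vnorm x.
Proof. exact: sqrt_pos. Qed.

Lemma vnorm_sub_sym n (x y : vec n) : vnorm (vsub x y) = vnorm (vsub y x).
Proof. rewrite /vnorm /dot; congr sqrt; apply: eq_bigr => i _; rewrite /vsub; ring. Qed.

Lemma vnorm_scale n (t : R) (x : vec n) : 0 <= t -> vnorm (fun i => t * x i) = t * vnorm x.
Proof.
move=> Ht; rewrite /vnorm.
have -> : dot (fun i => t * x i) (fun i => t * x i) = (t * t) * dot x x.
  rewrite /dot.
  have := @big_lin _ (t*t) 0 (fun i => x i * x i) (fun i => x i * x i).
  rewrite Rmult_0_l Rplus_0_r => <-; apply: eq_bigr => i _; ring.
rewrite sqrt_mult_alt; last nra.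
by rewrite sqrt_square.
Qed.

Lemma CS n (u v : vec n) : Rabs (dot u v) <= vnorm u * vnorm v.
Proof.
have Q : forall l, 0 <= dot u u - 2 * l * dot u v + l * l * dot v v.
  move=> l.
  have := dot_ge0 (fun i => u i - l * v i).
  suff -> : dot (fun i => u i - l * v i) (fun i => u i - l * v i) = dot u u - 2 * l * dot u v + l * l * dot v v by [].
  rewrite /dot.
  transitivity (\big[Rplus/0]_(i<n) (1 * (u i * u i) + 1 * ((-2*l) * (u i * v i) + (l*l) * (v i * v i)))).
    by apply: eq_bigr => i _; ring.
  rewrite big_lin big_lin; ring.
have K : dot u v * dot u v <= dot u u * dot v v.
  have hv := dot_ge0 v; have hu := dot_ge0 u.
  case: (Rle_lt_or_eq_dec 0 (dot v v) hv) => Hv.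
    have := Q (dot u v / dot v v).
    move=> H.
    have : 0 <= dot v v * (dot u u - 2 * (dot u v / dot v v) * dot u v + dot u v / dot v v * (dot u v / dot v v) * dot v v) by apply: Rmult_le_pos; lra.
    have -> : dot v v * (dot u u - 2 * (dot u v / dot v v) * dot u v + dot u v / dot v v * (dot u v / dot v v) * dot v v) = dot u u * dot v v - dot u v * dot u v by field; lra.
    lra.
  have -> : dot u v = 0.
    case: (Req_dec (dot u v) 0) => // Hne.
    have := Q ((dot u u + 1) / (2 * dot u v)).
    rewrite -Hv.
    have -> : dot u u - 2 * ((dot u u + 1) / (2 * dot u v)) * dot u v + (dot u u + 1) / (2 * dot u v) * ((dot u u + 1) / (2 * dot u v)) * 0 = -1 by field.
    lra.
  rewrite -Hv; lra.
rewrite /vnorm -sqrt_mult_alt; last exact: dot_ge0.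
rewrite -sqrt_Rsqr_abs; apply: sqrt_le_1_alt.
rewrite /Rsqr; lra.
Qed.

Lemma vnorm0_eq n (x y : vec n) : vnorm (vsub x y) = 0 -> x = y.
Proof.
move=> H; have H0 := sqrt_eq_0 _ (dot_ge0 _) H.
apply: functional_extensionality => i.
have := @term_le_big _ (fun j => vsub x y j * vsub x y j) i (fun j => ltac:(nra)).
rewrite -/(dot (vsub x y) (vsub x y)) H0 /vsub => Hi.
nra.
Qed.

Lemma comb_sub n (y z : vec n) lam :
  vsub (vadd (vscale lam y) (vscale (1 - lam) z)) y = (fun i => (1 - lam) * vsub z y i).
Proof. apply: functional_extensionality => i; rewrite /vsub /vadd /vscale; ring. Qed.

Lemma grad_ineq n (h : vec n -> R) (v y z : vec n) (cc : R) :
  is_gradient h v y ->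
  (forall lam, 0 <= lam <= 1 -> h (vadd (vscale lam y) (vscale (1 - lam) z))
      <= lam * h y + (1 - lam) * h z - cc * lam * (1 - lam)) ->
  h y + dot v (vsub z y) + cc <= h z.
Proof.
move=> Hg Hc.
apply: Rnot_lt_le => Hlt.
set P := dot v (vsub z y).
set d0 := h y + P + cc - h z.
have d0pos : 0 < d0 by rewrite /d0 /P; lra.
set N := vnorm (vsub z y).
have N0 : 0 <= N by apply: vnorm_ge0.
set eps := d0 / (2 * (N + 1)).
have epspos : 0 < eps by rewrite /eps; apply: Rdiv_lt_0_compat; lra.
have epsN : eps * N = d0 / 2 - eps by rewrite /eps; field; lra.
set kap := d0 / (2 * (Rabs cc + 1)).
have ca := Rabs_pos cc.
have kappos : 0 < kap by rewrite /kap; apply: Rdiv_lt_0_compat; lra.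
have kapc : Rabs cc * kap = d0 / 2 - kap by rewrite /kap; field; lra.
case: (Hg eps epspos) => del [delpos Hdel].
set t := Rmin (1/2) (Rmin (del / (N+1)) kap).
have tpos : 0 < t.
  rewrite /t; apply: Rmin_glb_lt; first lra.
  apply: Rmin_glb_lt => //; apply: Rdiv_lt_0_compat; lra.
have t1 : t <= 1/2 by apply: Rmin_l.
have t2 : t <= del / (N+1) by rewrite /t; apply: Rle_trans (Rmin_r _ _) (Rmin_l _ _).
have t3 : t <= kap by rewrite /t; apply: Rle_trans (Rmin_r _ _) (Rmin_r _ _).
have H1 := Hc (1 - t) ltac:(lra).
move: H1.
set w := vadd (vscale (1 - t) y) (vscale (1 - (1 - t)) z).
move=> H1.
have Hw : vsub w y = (fun i => t * vsub z y i).
  rewrite /w comb_sub; apply: functional_extensionality => i; congr (_ * _); ring.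
have Nw : vnorm (vsub w y) = t * N by rewrite Hw vnorm_scale //; lra.
have tN : t * N < del.
  have : t * (N + 1) <= del.
    have -> : del = (del / (N+1)) * (N+1) by field; lra.
    apply: Rmult_le_compat_r; lra.
  nra.
have H2 := Hdel w ltac:(rewrite Nw; lra).
have Hdot : dot v (vsub w y) = t * P.
  rewrite Hw /P.
  have -> : (fun i => t * vsub z y i) = (fun i => t * vsub z y i + 0 * vsub z y i).
    by apply: functional_extensionality => i; ring.
  rewrite dot_lin; ring.
rewrite Hdot Nw in H2.
have H4 : t * d0 <= t * (eps * N + cc * t).
  rewrite /d0.
  have : h w - h y - t * P >= - (eps * (t * N)) by move: (Rle_abs (-(h w - h y - t * P))); rewrite Rabs_Ropp; lra.
  move=> H5.
  replace (1 - (1 - t)) with t in H1 by ring.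
  nra.
have H5 : d0 <= eps * N + cc * t by apply: (Rmult_le_reg_l t) => //.
have H6 : cc * t <= Rabs cc * kap.
  apply: Rle_trans (Rle_abs _) _; rewrite Rabs_mult (Rabs_pos_eq t); last lra.
  by apply: Rmult_le_compat_l.
lra.
Qed.

Lemma dot_comb n (u y z : vec n) lam :
  dot u (vadd (vscale lam y) (vscale (1 - lam) z)) = lam * dot u y + (1 - lam) * dot u z.
Proof. by rewrite -dot_lin. Qed.

Lemma mulmv_comb m n (A : mat m n) (y z : vec n) lam :
  mulmv A (vadd (vscale lam y) (vscale (1 - lam) z)) =
  vadd (vscale lam (mulmv A y)) (vscale (1 - lam) (mulmv A z)).
Proof.
apply: functional_extensionality => i; rewrite /mulmv /vadd /vscale -big_lin.
by apply: eq_bigr => j _; ring.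
Qed.

Lemma poly_convex k n (B : mat k n) (c : vec k) y z lam :
  polyhedron B c y -> polyhedron B c z -> 0 <= lam <= 1 ->
  polyhedron B c (vadd (vscale lam y) (vscale (1 - lam) z)).
Proof.
rewrite /polyhedron /vle mulmv_comb /vadd /vscale => Hy Hz Hl i.
have := Hy i; have := Hz i; nra.
Qed.

Lemma dist_ge0 n (S : vec n -> Prop) x r : is_dist S x r -> 0 <= r.
Proof.
move=> [_ H]; apply: H => v [y [_ ->]]; exact: vnorm_ge0.
Qed.

Lemma dist_ext n (S T : vec n -> Prop) x r : (forall y, S y <-> T y) -> is_dist S x r -> is_dist T x r.
Proof.
move=> E [H1 H2]; split.
  move=> v [y [Ty ->]]; apply: H1; exists y; split => //; exact/E.
move=> r' H; apply: H2 => v [y [Sy ->]]; apply: H; exists y; split => //; exact/E.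
Qed.

Lemma final_arith (L Dl e q gm G MA nbM mu theta r : R) :
  0 < mu -> 0 < theta -> 0 <= G -> 0 <= e -> 0 <= Dl -> e <= MA ->
  Rabs q <= nbM -> q = Dl - gm -> Rabs gm <= G * e -> 0 <= r ->
  r <= theta * sqrt (e ^ 2 + q ^ 2) -> L >= Dl + mu * e ^ 2 ->
  L >= 2 * (1 / (2 * theta ^ 2 * (nbM + 3 * G * MA + 2 / mu * (G ^ 2 + 1)))) * r ^ 2.
Proof.
move=> Hmu Hth HG He HD HMA Hq Hqd Hg Hr Hrs HL.
set K := nbM + 3 * G * MA + 2 / mu * (G ^ 2 + 1).
have a0 := Rabs_pos q.
have GMA : 0 <= G * MA by nra.
have Kmu : K * mu = (nbM + 3 * G * MA) * mu + 2 * (G ^ 2 + 1) by rewrite /K; field; lra.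
have nb0 : 0 <= nbM by lra.
have Kpos : 0 < K.
  have : 0 < K * mu by rewrite Kmu; nra.
  move=> H; nra.
set S := e ^ 2 + q ^ 2.
have S0 : 0 <= S by rewrite /S; nra.
have r2 : r ^ 2 <= theta ^ 2 * S.
  have sq := sqrt_sqrt S S0.
  have s0 := sqrt_pos S.
  have : r * r <= (theta * sqrt S) * (theta * sqrt S) by apply: Rmult_le_compat.
  nra.
have aq : Rabs q <= Dl + G * e.
  rewrite Hqd; apply: Rle_trans (Rabs_triang _ _) _; rewrite Rabs_Ropp Rabs_pos_eq //; lra.
have q2 : q ^ 2 = Rabs q * Rabs q by rewrite -Rabs_mult -(Rabs_pos_eq (q^2)); [f_equal; ring| nra].
have Sb : S <= K * (Dl + mu * e ^ 2).
  have h1 : Rabs q * Rabs q <= Rabs q * Dl + Rabs q * (G * e) by nra.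
  have h2 : Rabs q * Dl <= nbM * Dl by nra.
  have h3 : Rabs q * (G * e) <= (Dl + G * e) * (G * e) by apply: Rmult_le_compat_r; nra.
  have GD : 0 <= G * Dl by nra.
  have h4 : Dl * (G * e) <= G * MA * Dl by have := Rmult_le_compat_l (G * Dl) e MA GD HMA; lra.
  have h5 : K * (Dl + mu * e ^ 2) = K * Dl + (nbM + 3 * G * MA) * mu * e^2 + 2 * (G^2+1) * e^2.
    by rewrite Rmult_plus_distr_l -Rmult_assoc Kmu; ring.
  have h6 : 0 <= (nbM + 3 * G * MA) * mu * e^2 by apply: Rmult_le_pos; nra.
  have h7 : K * Dl >= (nbM + G * MA) * Dl.
    rewrite /K; have : 0 <= (2 * G * MA + 2 / mu * (G ^ 2 + 1)) * Dl.
      apply: Rmult_le_pos => //; have : 0 < 2 / mu by apply: Rdiv_lt_0_compat; lra. nra.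
    nra.
  rewrite /S h5 q2; nra.
have -> : 2 * (1 / (2 * theta ^ 2 * K)) * r ^ 2 = r ^ 2 / (theta ^ 2 * K) by field; lra.
have t2 : 0 < theta ^ 2 by nra.
have : r ^ 2 / (theta ^ 2 * K) <= Dl + mu * e ^ 2.
  apply: (Rmult_le_reg_r (theta ^ 2 * K)); first nra.
  rewrite /Rdiv Rmult_assoc Rinv_l; last nra.
  nra.
lra.
Qed.

Lemma neg_dot_le n (u w : vec n) : - dot u w <= vnorm u * vnorm w.
Proof. have := CS u w; have := Rle_abs (- dot u w); rewrite Rabs_Ropp; lra. Qed.

Unset Implicit Arguments.
Set Strict Implicit.

Theorem mainTheorem10 (m d k : nat) (A : mat m d) (b : vec d) (B : mat k d) (c : vec k)
  (g : vec m -> R) (gradg : vec m -> vec m) (U : vec m -> Prop) (mu_g : R)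
  (gradf : vec d -> vec d) (G M M_A theta : R) :
  let D := polyhedron B c in
  let f := fun x : vec d => g (mulmv A x) + dot b x in
  let Xstar := fun x : vec d => D x /\ forall y, D y -> f x <= f y in
  (exists x0, D x0) ->
  (exists R0, forall x, D x -> vnorm x <= R0) ->
  open_vset U ->
  (forall x, D x -> U (mulmv A x)) ->
  C1_on U g gradg ->
  0 < mu_g ->
  strongly_convex_on mu_g (image_set A D) g ->
  (forall x, D x -> is_gradient f (gradf x) x) ->
  is_lub (fun v => exists x, D x /\ v = vnorm (gradg (mulmv A x))) G ->
  is_diam D M ->
  is_diam (image_set A D) M_A ->
  hoffman_constant A b B c theta ->
  forall x xs, D x -> Xstar xs ->
  forall r, is_dist Xstar x r ->
    let mutilde := 1 / (2 * theta ^ 2 *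
          (vnorm b * M + 3 * G * M_A + 2 / mu_g * (G ^ 2 + 1))) in
    f xs - f x - 2 * dot (gradf x) (vsub xs x) >= 2 * mutilde * r ^ 2.
Proof.
move=> D f Xstar _ _ _ HD HC1 Hmu Hsc Hgf HG HM HMA [Hth Hhof] x xs Hx Hxs r Hr mutilde.
have [HgradU _] := HC1.
have [Dxs Hopt] := Hxs.
have Im : forall y, D y -> image_set A D (mulmv A y).
  by move=> y Hy; exists y.
have fsc : forall y z lam, D y -> D z -> 0 <= lam <= 1 ->
   f (vadd (vscale lam y) (vscale (1 - lam) z)) <= lam * f y + (1 - lam) * f z
     - mu_g / 2 * vnorm (vsub (mulmv A y) (mulmv A z)) ^ 2 * lam * (1 - lam).
  move=> y z lam Hy Hz Hl; rewrite /f mulmv_comb dot_comb.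
  have := Hsc (mulmv A y) (mulmv A z) lam (Im y Hy) (Im z Hz) Hl.
  lra.
have S1 : f x + dot (gradf x) (vsub xs x) + mu_g / 2 * vnorm (vsub (mulmv A x) (mulmv A xs)) ^ 2 <= f xs.
  apply: grad_ineq; first exact: Hgf.
  move=> lam Hl; have := fsc x xs lam Hx Dxs Hl; lra.
have Ge : forall y, D y -> vnorm (gradg (mulmv A y)) <= G.
  move=> y Hy; apply: (proj1 HG); exists y; split => //.
have e0 := vnorm_ge0 (vsub (mulmv A x) (mulmv A xs)).
have G0 : 0 <= G by have := Ge x Hx; have := vnorm_ge0 (gradg (mulmv A x)); lra.
have g1 : g (mulmv A x) - g (mulmv A xs) <= G * vnorm (vsub (mulmv A x) (mulmv A xs)).
  have H : g (mulmv A x) + dot (gradg (mulmv A x)) (vsub (mulmv A xs) (mulmv A x))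
       + mu_g / 2 * vnorm (vsub (mulmv A x) (mulmv A xs)) ^ 2 <= g (mulmv A xs).
    apply: grad_ineq; first by apply: HgradU; apply: HD.
    move=> lam Hl; have := Hsc _ _ lam (Im x Hx) (Im xs Dxs) Hl; lra.
  have := neg_dot_le (gradg (mulmv A x)) (vsub (mulmv A xs) (mulmv A x)).
  rewrite -vnorm_sub_sym.
  have := Rmult_le_compat_r _ _ _ e0 (Ge x Hx).
  have : 0 <= mu_g / 2 * vnorm (vsub (mulmv A x) (mulmv A xs)) ^ 2.
    apply: Rmult_le_pos; [lra | nra].
  lra.
have g2 : g (mulmv A xs) - g (mulmv A x) <= G * vnorm (vsub (mulmv A x) (mulmv A xs)).
  have H : g (mulmv A xs) + dot (gradg (mulmv A xs)) (vsub (mulmv A x) (mulmv A xs))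
       + mu_g / 2 * vnorm (vsub (mulmv A xs) (mulmv A x)) ^ 2 <= g (mulmv A x).
    apply: grad_ineq; first by apply: HgradU; apply: HD.
    move=> lam Hl; have := Hsc _ _ lam (Im xs Dxs) (Im x Hx) Hl; lra.
  have := neg_dot_le (gradg (mulmv A xs)) (vsub (mulmv A x) (mulmv A xs)).
  have := Rmult_le_compat_r _ _ _ e0 (Ge xs Dxs).
  have : 0 <= mu_g / 2 * vnorm (vsub (mulmv A xs) (mulmv A x)) ^ 2.
    apply: Rmult_le_pos; [lra | have := vnorm_ge0 (vsub (mulmv A xs) (mulmv A x)); nra].
  lra.
have Hq : Rabs (dot b x - dot b xs) <= vnorm b * M.
  rewrite -dot_sub; apply: Rle_trans (CS _ _) _.
  apply: Rmult_le_compat_l; first exact: vnorm_ge0.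
  apply: (proj1 HM); exists x, xs; do !split => //.
have HeMA : vnorm (vsub (mulmv A x) (mulmv A xs)) <= M_A.
  apply: (proj1 HMA); exists (mulmv A x), (mulmv A xs); do !split => //; exact: Im.
have HDl : 0 <= f x - f xs by have := Hopt x Hx; lra.
have XP : forall y, Xstar y <-> P_ts A b B c (mulmv A xs) (dot b xs) y.
  move=> y; split.
    move=> [Dy Hy].
    have fy : f y = f xs by have := Hy xs Dxs; have := Hopt y Dy; lra.
    have At : mulmv A y = mulmv A xs.
      apply: vnorm0_eq.
      have := fsc y xs (1/2) Dy Dxs ltac:(lra).
      have := Hopt _ (poly_convex Dy Dxs (lam := 1/2) ltac:(lra)).
      have := vnorm_ge0 (vsub (mulmv A y) (mulmv A xs)).
      set N := vnorm (vsub (mulmv A y) (mulmv A xs)).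
      move=> N0 H1 H2.
      have : mu_g * N ^ 2 <= 0 by lra.
      move=> HN; apply: Rle_antisym => //; have : N ^ 2 <= 0 by nra. nra.
    split => //; split => //.
    move: fy; rewrite /f At; lra.
  move=> [Ay [By Cy]].
  have Dy : D y by [].
  split => // z Dz.
  have -> : f y = f xs by rewrite /f Ay By.
  exact: Hopt.
have Hr' := dist_ext XP Hr.
have Ex : exists y, P_ts A b B c (mulmv A xs) (dot b xs) y by exists xs; apply/XP.
have Hhof' := Hhof (mulmv A xs) (dot b xs) Ex x Hx r Hr'.
apply: (final_arith (gm := g (mulmv A x) - g (mulmv A xs)) Hmu Hth G0 e0 HDl HeMA Hq).
- rewrite /f; ring.
- by apply: Rabs_le; lra.
- exact: dist_ge0 Hr.
- exact: Hhof'.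
- lra.
Qed.
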